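(* Let $S$ be a dense subsemigroup of $((0,\infty),+)$ and let $A\subseteq S$. Then $A$ is quasi-central near zero if and only if there exist a dynamical system $(X,\langle T_s\rangle_{s\in S})$, points $x,y\in X$ such that the pair $(x,y)$ is $JIUR_0$, and a neighbourhood $U$ of $y$ such that $A=\{s\in S: T_s(x)\in U\}$.
   Context: ''Dense'' means dense in the usual topology of $(0,\infty)$. $\beta S$ is the Stone–Čech compactification of the discrete set $S$ (ultrafilters on $S$), with $+$ extended so that $(\beta S,+)$ is a compact right topological semigroup: $A\in p+q$ iff $\{x\in S:-x+A\in q\}\in p$, where $-x+A=\{y\in S:x+y\in A\}$. $O^{+}(S)=\{p\in\beta S: S\cap(0,\epsilon)\in p\text{ for every }\epsilon>0\}$, a compact right topological subsemigroup of $\beta S$; $K(O^{+}(S))$ is its smallest two-sided ideal and $\mathrm{Cl}$ is closure in $\beta S$. A set $A\subseteq S$ is quasi-central near zero iff there is an idempotent $p\in\mathrm{Cl}\,K(O^{+}(S))$ with $A\in p$. A dynamical system $(X,\langle T_s\rangle_{s\in S})$ consists of a compact Hausdorff space $X$ and continuous maps $T_s:X\to X$ with $T_s\circ T_t=T_{s+t}$. A subset $A\subseteq S$ is piecewise syndetic near zero iff there exist sequences $\langle F_n\rangle$ and $\langle\delta_n\rangle$ such that (1) for each $n$, $F_n$ is a finite nonempty subset of $(0,\frac1n)\cap S$ and $\delta_n\in(0,\frac1n)$, and (2) for every finite nonempty $G\subseteq S$ and every $\mu>0$ there is $x\in(0,\mu)\cap S$ with $(G\cap(0,\delta_n))+x\subseteq\bigcup_{t\in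 F_n}(-t+A)$ for all $n\in\mathbb{N}$. The pair $(x,y)$ is $JIUR_0$ (jointly intermittently uniformly recurrent near zero) iff for every neighbourhood $U$ of $y$, the set $\{s\in S: T_s(x)\in U\text{ and }T_s(y)\in U\}$ is piecewise syndetic near zero. *)

(* Defs.v *)
From Stdlib Require Import Reals List.
Open Scope R_scope.

Definition dense_subsemigroup (S : R -> Prop) : Prop :=
  (forall x, S x -> 0 < x) /\
  (forall x y, S x -> S y -> S (x + y)) /\
  (forall a b, 0 < a -> a < b -> exists s, S s /\ a < s /\ s < b).

(* Points of betaS are ultrafilters on S; subsets of S are predicates on R,
   and p A depends only on A restricted to S. *)
Definition ultrafilter (S : R -> Prop) (p : (R -> Prop) -> Prop) : Prop :=
  p S /\
  ~ p (fun _ => False) /\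
  (forall A B, p A -> p B -> p (fun x => A x /\ B x)) /\
  (forall A B : R -> Prop, p A -> (forall x, A x -> B x) -> p B) /\
  (forall A, p A \/ p (fun x => S x /\ ~ A x)).

Definition shiftset (S : R -> Prop) (x : R) (A : R -> Prop) : R -> Prop :=
  fun y => S y /\ A (x + y).

Definition bplus (S : R -> Prop) (p q : (R -> Prop) -> Prop) : (R -> Prop) -> Prop :=
  fun A => p (fun x => S x /\ q (shiftset S x A)).

Definition is_sum (S : R -> Prop) (r p q : (R -> Prop) -> Prop) : Prop :=
  forall A, r A <-> bplus S p q A.

Definition Oplus (S : R -> Prop) (p : (R -> Prop) -> Prop) : Prop :=
  ultrafilter S p /\
  forall eps, 0 < eps -> p (fun x => S x /\ 0 < x /\ x < eps).

Definition two_sided_ideal_Oplus (S : R -> Prop)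
  (I : ((R -> Prop) -> Prop) -> Prop) : Prop :=
  (exists q, I q) /\
  (forall q, I q -> Oplus S q) /\
  (forall p q r, Oplus S p -> I q -> is_sum S r p q -> I r) /\
  (forall p q r, Oplus S p -> I q -> is_sum S r q p -> I r).

(* K(O^+(S)) : the smallest two-sided ideal = intersection of all of them *)
Definition K_Oplus (S : R -> Prop) (q : (R -> Prop) -> Prop) : Prop :=
  forall I, two_sided_ideal_Oplus S I -> I q.

(* closure in betaS: every basic clopen {r : A in r} around p meets the set *)
Definition beta_closure (S : R -> Prop) (M : ((R -> Prop) -> Prop) -> Prop)
  (p : (R -> Prop) -> Prop) : Prop :=
  ultrafilter S p /\
  forall A, p A -> exists q, M q /\ q A.

Definition idempotent (S : R -> Prop) (p : (R -> Prop) -> Prop) : Prop :=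
  ultrafilter S p /\ is_sum S p p p.

Definition quasi_central_near_zero (S A : R -> Prop) : Prop :=
  exists p, idempotent S p /\ beta_closure S (K_Oplus S) p /\ p A.

Definition piecewise_syndetic_near_zero (S A : R -> Prop) : Prop :=
  exists (F : nat -> list R) (delta : nat -> R),
    (forall n : nat, (1 <= n)%nat ->
       F n <> nil /\
       (forall t, In t (F n) -> S t /\ 0 < t /\ t < 1 / INR n) /\
       0 < delta n /\ delta n < 1 / INR n) /\
    (forall (G : list R) (mu : R),
       G <> nil -> (forall g, In g G -> S g) -> 0 < mu ->
       exists x, S x /\ 0 < x /\ x < mu /\
         forall n : nat, (1 <= n)%nat ->
           forall g, In g G -> 0 < g -> g < delta n ->
             exists t, In t (F n) /\ shiftset S t A (g + x)).

Record topology (X : Type) : Type := {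
  open : (X -> Prop) -> Prop;
  open_full : open (fun _ => True);
  open_inter : forall U V, open U -> open V -> open (fun x => U x /\ V x);
  open_union : forall Fam : (X -> Prop) -> Prop,
      (forall U, Fam U -> open U) -> open (fun x => exists U, Fam U /\ U x)
}.
Arguments open {X} t _.

Definition compact_space {X : Type} (t : topology X) : Prop :=
  forall Fam : (X -> Prop) -> Prop,
    (forall U, Fam U -> open t U) ->
    (forall x, exists U, Fam U /\ U x) ->
    exists l : list (X -> Prop),
      (forall U, In U l -> Fam U) /\ (forall x, exists U, In U l /\ U x).

Definition hausdorff {X : Type} (t : topology X) : Prop :=
  forall x y : X, x <> y ->
    exists U V, open t U /\ open t V /\ U x /\ V y /\
                (forall z, U z -> V z -> False).

Definition continuous {X : Type} (t : topology X) (f : X -> X) : Prop :=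
  forall V, open t V -> open t (fun x => V (f x)).

Definition nbhd_top {X : Type} (t : topology X) (U : X -> Prop) (y : X) : Prop :=
  exists V, open t V /\ V y /\ (forall z, V z -> U z).

Definition dynamical_system (S : R -> Prop) {X : Type} (t : topology X)
  (T : R -> X -> X) : Prop :=
  compact_space t /\ hausdorff t /\
  (forall s, S s -> continuous t (T s)) /\
  (forall s u, S s -> S u -> forall z, T s (T u z) = T (s + u) z).

Definition JIUR0 (S : R -> Prop) {X : Type} (t : topology X)
  (T : R -> X -> X) (x y : X) : Prop :=
  forall U, nbhd_top t U y ->
    piecewise_syndetic_near_zero S (fun s => S s /\ U (T s x) /\ U (T s y)).

(* Main.v *)
Require Import Defs.
From Stdlib Require Import Reals List Lra Lia Classical FunctionalExtensionality PropExtensionality ClassicalEpsilon ProofIrrelevance.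
From mathcomp Require classical_sets.
Open Scope R_scope.


Lemma zorn_max {T : Type} (P : (T -> Prop) -> Prop) :
  (forall F : (T -> Prop) -> Prop, (forall X, F X -> P X) ->
     (forall X Y, F X -> F Y -> (forall x, X x -> Y x) \/ (forall x, Y x -> X x)) ->
     P (fun x => exists X, F X /\ X x)) ->
  exists A, P A /\ forall B, P B -> (forall x, A x -> B x) -> forall x, B x -> A x.
Proof.
  intros H.
  assert (Hc : forall F : classical_sets.set (classical_sets.set T),
     classical_sets.subset F P ->
     classical_sets.total_on F classical_sets.subset ->
     P (classical_sets.bigcup F (fun X : classical_sets.set T => X))).
  { intros F FP Ftot.
    assert (E : classical_sets.bigcup F (fun X => X) = (fun x => exists X, F X /\ X x)).
    { apply functional_extensionality; intro x; apply propositional_extensionality.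
      unfold classical_sets.bigcup, classical_sets.mkset; split.
      - intros [X FX Xx]; eauto.
      - intros [X [FX Xx]]; exists X; auto. }
    rewrite E. apply H; [exact FP | intros X Y FX FY; destruct (Ftot X Y FX FY); auto]. }
  destruct (@classical_sets.Zorn_bigcup T P Hc) as [A [PA HA]].
  exists A; split; [exact PA|].
  intros B PB AB x Bx.
  apply NNPP; intro nA.
  apply (HA B); [|exact PB]. split; [exact AB|].
  intro BA. apply nA. apply BA. exact Bx.
Qed.

Definition inter (l : list (R -> Prop)) : R -> Prop := fun x => forall B, In B l -> B x.

Lemma uf_up S p A B : ultrafilter S p -> p A -> (forall x, S x -> A x -> B x) -> p B.
Proof.
  intros [H1 [H2 [H3 [H4 H5]]]] pA H.
  apply H4 with (A := fun x => A x /\ S x).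
  - apply H3; auto.
  - intros x [Ax Sx]; auto.
Qed.

Lemma uf_S S p : ultrafilter S p -> p S.
Proof. intros [H _]; exact H. Qed.

Lemma uf_and S p A B : ultrafilter S p -> p A -> p B -> p (fun x => A x /\ B x).
Proof. intros [H1 [H2 [H3 [H4 H5]]]]; auto. Qed.

Lemma uf_nonempty S p A : ultrafilter S p -> p A -> exists x, S x /\ A x.
Proof.
  intros U pA. apply NNPP; intro N.
  destruct U as [H1 [H2 [H3 [H4 H5]]]].
  apply H2. apply H4 with (A := fun x => A x /\ S x). apply H3; auto.
  intros x [Ax Sx]; apply N; eauto.
Qed.

Lemma uf_compl S p A : ultrafilter S p -> ~ p A -> p (fun x => S x /\ ~ A x).
Proof. intros [H1 [H2 [H3 [H4 H5]]]] N. destruct (H5 A); tauto. Qed.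

Lemma uf_not_both S p A : ultrafilter S p -> p A -> p (fun x => S x /\ ~ A x) -> False.
Proof.
  intros U pA pB. destruct (uf_nonempty S p _ U (uf_and S p _ _ U pA pB)) as [x [_ [Ax [_ nA]]]]; auto.
Qed.

Lemma uf_inter_list S p l : ultrafilter S p -> (forall B, In B l -> p B) -> p (inter l).
Proof.
  intros U; induction l as [|B l IH]; intros Hl.
  - apply (uf_up S p S); auto. apply uf_S; auto. intros x _ _ C HC; inversion HC.
  - apply (uf_up S p (fun x => B x /\ inter l x)); [exact U| |].
    + apply (uf_and S p); [exact U| |]. apply Hl; simpl; auto. apply IH; intros; apply Hl; simpl; auto.
    + intros x _ [Bx Ix] C [<-|HC]; [exact Bx | exact (Ix C HC)].
Qed.

Lemma uf_union_list {T : Type} S p (l : list T) (C : T -> R -> Prop) :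
  ultrafilter S p -> p (fun x => exists t, In t l /\ C t x) -> exists t, In t l /\ p (C t).
Proof.
  intros U; induction l as [|a l IH]; intros H.
  - exfalso. destruct (uf_nonempty S p _ U H) as [x [_ [t [[] _]]]].
  - destruct (classic (p (C a))) as [Ha|Ha].
    + exists a; simpl; auto.
    + destruct IH as [t [It Ct]].
      * apply (uf_up S p (fun x => (exists t, In t (a :: l) /\ C t x) /\ (S x /\ ~ C a x))); [exact U| |].
        -- apply (uf_and S p); [exact U|exact H|]. apply (uf_compl S p); auto.
        -- intros x _ [[t [[<-|It] Ct]] [_ nC]]. contradiction. eauto.
      * exists t; simpl; auto.
Qed.

Lemma uf_ext S p q : ultrafilter S p -> ultrafilter S q -> (forall A, p A -> q A) -> p = q.
Proof.
  intros Up Uq H. apply functional_extensionality; intro A; apply propositional_extensionality.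
  split; auto. intros qA. apply NNPP; intro N.
  apply (uf_not_both S q A Uq qA). apply H. apply uf_compl; auto.
Qed.

Definition FIP (S : R -> Prop) (G : (R -> Prop) -> Prop) : Prop :=
  forall l, (forall B, In B l -> G B) -> exists x, S x /\ inter l x.

Lemma FIP_mono S G H : (forall B, G B -> H B) -> FIP S H -> FIP S G.
Proof. intros GH F l Hl. apply F. intros; apply GH, Hl; auto. Qed.

Lemma fip_add S H C :
  (forall l, (forall B, In B l -> H B) -> exists x, S x /\ C x /\ inter l x) ->
  FIP S (fun B => H B \/ B = C).
Proof.
  intros Hc l Hl.
  assert (E : exists l', (forall B, In B l' -> H B) /\ forall x, C x -> inter l' x -> inter l x).
  { clear Hc. induction l as [|B l IH].
    - exists nil. split. intros _ []. intros x _ _ B' [].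
    - destruct IH as [l' [H1 H2]]. intros; apply Hl; simpl; auto.
      destruct (Hl B (or_introl eq_refl)) as [HB| ->].
      + exists (B :: l'). split.
        * intros B' [<-|I]; auto.
        * intros x Cx Ix B' [<-|I]. apply Ix; simpl; auto. apply H2; auto. intros B'' I'; apply Ix; simpl; auto.
      + exists l'. split; auto. intros x Cx Ix B' [<-|I]; auto. apply H2; auto. }
  destruct E as [l' [H1 H2]]. destruct (Hc l' H1) as [x [Sx [Cx Ix]]]. exists x; auto.
Qed.

Lemma UL S G : FIP S G -> exists p, ultrafilter S p /\ forall B, G B -> p B.
Proof.
  intros FG.
  destruct (zorn_max (fun F => FIP S (fun B => F B \/ G B))) as [A [PA HA]].
  - intros F FP Ftot l Hl.
    assert (E : (exists X, F X /\ forall B, In B l -> X B \/ G B) \/ (forall B, In B l -> G B)).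
    { induction l as [|B l IH].
      - right. intros _ [].
      - destruct IH as [[X [FX HX]]|HG]. intros; apply Hl; simpl; auto.
        + destruct (Hl B (or_introl eq_refl)) as [[Y [FY YB]]|GB].
          * destruct (Ftot X Y FX FY) as [XY|YX].
            -- left. exists Y. split; auto. intros B' [<-|I]; auto. destruct (HX B' I); auto.
            -- left. exists X. split; auto. intros B' [<-|I]; auto.
          * left. exists X. split; auto. intros B' [<-|I]; auto.
        + destruct (Hl B (or_introl eq_refl)) as [[Y [FY YB]]|GB].
          * left. exists Y. split; auto. intros B' [<-|I]; auto.
          * right. intros B' [<-|I]; auto. }
    destruct E as [[X [FX HX]]|HG].
    + apply (FP X FX); auto.
    + apply FG; auto.
  - set (p := fun B => A B \/ G B).
    assert (add : forall C, (forall l, (forall B, In B l -> p B) -> exists x, S x /\ C x /\ inter l x) -> p C).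
    { intros C HC. left. apply (HA (fun B => A B \/ B = C)).
      - apply FIP_mono with (H := fun B => p B \/ B = C).
        + unfold p; intros B [[?|?]|?]; auto.
        + apply fip_add; auto.
      - auto.
      - auto. }
    exists p. split.
    + split; [|split; [|split; [|split]]].
      * apply add. intros l Hl. destruct (PA l Hl) as [x [Sx Ix]]. eauto.
      * intro pF. assert (Hl : forall B, In B (cons (fun _ => False) nil) -> p B).
        { intros B [<-|[]]; auto. }
        destruct (PA _ Hl) as [x [_ Ix]]. apply (Ix _ (or_introl eq_refl)).
      * intros A1 B1 pA pB. apply add. intros l Hl.
        assert (Hl' : forall B, In B (A1 :: B1 :: l) -> p B).
        { intros B [<-|[<-|I]]; auto. }
        destruct (PA _ Hl') as [x [Sx Ix]].
        exists x. split; auto. split. split; apply Ix; simpl; auto. intros B I; apply Ix; simpl; auto.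
      * intros A1 B1 pA AB. apply add. intros l Hl.
        assert (Hl' : forall B, In B (A1 :: l) -> p B).
        { intros B [<-|I]; auto. }
        destruct (PA _ Hl') as [x [Sx Ix]].
        exists x. split; auto. split. apply AB, Ix; simpl; auto. intros B I; apply Ix; simpl; auto.
      * intros C. apply NNPP; intro N. apply not_or_and in N. destruct N as [N1 N2].
        assert (E1 : ~ forall l, (forall B, In B l -> p B) -> exists x, S x /\ C x /\ inter l x).
        { intro H; apply N1, add, H. }
        assert (E2 : ~ forall l, (forall B, In B l -> p B) -> exists x, S x /\ (S x /\ ~ C x) /\ inter l x).
        { intro H; apply N2, add, H. }
        apply not_all_ex_not in E1; destruct E1 as [l1 E1].
        apply not_all_ex_not in E2; destruct E2 as [l2 E2].
        apply imply_to_and in E1; destruct E1 as [H1 E1].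
        apply imply_to_and in E2; destruct E2 as [H2 E2].
        assert (Hl' : forall B, In B (l1 ++ l2) -> p B).
        { intros B I; apply in_app_or in I; destruct I; auto. }
        destruct (PA _ Hl') as [x [Sx Ix]].
        destruct (classic (C x)).
        -- apply E1. exists x. split; auto. split; auto. intros B I; apply Ix, in_or_app; auto.
        -- apply E2. exists x. split; auto. split; auto. intros B I; apply Ix, in_or_app; auto.
    + unfold p; auto.
Qed.


Lemma uf_iff_S S p A B : ultrafilter S p -> (forall z, S z -> (A z <-> B z)) -> (p A <-> p B).
Proof.
  intros U H; split; intro HA; apply (uf_up S p _ _ U HA); intros z Sz; apply H; auto.
Qed.

Lemma ds_add S : dense_subsemigroup S -> forall x y, S x -> S y -> S (x + y).
Proof. intros [_ [H _]]; exact H. Qed.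

Lemma ds_pos S : dense_subsemigroup S -> forall x, S x -> 0 < x.
Proof. intros [H _]; exact H. Qed.

Lemma bplus_uf S p q : dense_subsemigroup S -> ultrafilter S p -> ultrafilter S q ->
  ultrafilter S (bplus S p q).
Proof.
  intros HS Up Uq. unfold bplus.
  split; [|split; [|split; [|split]]].
  - apply (uf_up S p S); auto. apply uf_S; auto. intros x Sx _. split; auto.
    apply (uf_up S q S); auto. apply uf_S; auto. intros y Sy _. split; auto. apply ds_add; auto.
  - intro H. destruct (uf_nonempty S p _ Up H) as [x [_ [_ Hq]]].
    destruct (uf_nonempty S q _ Uq Hq) as [y [_ [_ Hf]]]; exact Hf.
  - intros A B HA HB. apply (uf_up S p _ _ Up (uf_and S p _ _ Up HA HB)).
    intros x Sx [[_ qA] [_ qB]]. split; auto.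
    apply (uf_up S q _ _ Uq (uf_and S q _ _ Uq qA qB)).
    intros y Sy [[_ Ay] [_ By]]. repeat split; auto.
  - intros A B HA AB. apply (uf_up S p _ _ Up HA).
    intros x Sx [_ qA]. split; auto. apply (uf_up S q _ _ Uq qA).
    intros y Sy [_ Ay]. split; auto.
  - intros A. destruct (classic (p (fun x => S x /\ q (shiftset S x A)))) as [H|H]; [left; exact H|right].
    apply (uf_compl S p) in H; auto. apply (uf_up S p _ _ Up H).
    intros x Sx [_ N]. split; auto.
    assert (N' : ~ q (shiftset S x A)) by tauto.
    apply (uf_compl S q) in N'; auto. apply (uf_up S q _ _ Uq N').
    intros y Sy [_ N2]. split; auto. split. apply ds_add; auto. intro Ay. apply N2. split; auto.
Qed.

Lemma bplus_assoc S p q r : dense_subsemigroup S -> ultrafilter S p -> ultrafilter S q -> ultrafilter S r ->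
  bplus S p (bplus S q r) = bplus S (bplus S p q) r.
Proof.
  intros HS Up Uq Ur. apply functional_extensionality; intro A; apply propositional_extensionality.
  unfold bplus. apply (uf_iff_S S p); auto. intros x Sx.
  split; intros [_ H]; split; auto.
  - apply (uf_up S q _ _ Uq H). intros y Sy [_ H2]. split; auto. split. apply ds_add; auto.
    apply (uf_up S r _ _ Ur H2). intros z Sz [_ [_ H3]]. split; auto. rewrite Rplus_assoc; auto.
  - apply (uf_up S q _ _ Uq H). intros y Sy [_ [_ H2]]. split; auto.
    apply (uf_up S r _ _ Ur H2). intros z Sz [_ H3]. split; auto. split. apply ds_add; auto.
    rewrite <- Rplus_assoc; auto.
Qed.

Lemma Oplus_uf S p : Oplus S p -> ultrafilter S p.
Proof. intros [H _]; exact H. Qed.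

Lemma Oplus_add S p q : dense_subsemigroup S -> Oplus S p -> Oplus S q -> Oplus S (bplus S p q).
Proof.
  intros HS [Up Hp] [Uq Hq]. split. apply bplus_uf; auto.
  intros eps He. unfold bplus.
  apply (uf_up S p _ _ Up (Hp (eps/2) ltac:(lra))).
  intros x Sx [_ [x0 xe]]. split; auto.
  apply (uf_up S q _ _ Uq (Hq (eps/2) ltac:(lra))).
  intros y Sy [_ [y0 ye]]. split; auto. split. apply ds_add; auto. lra.
Qed.

Definition uset := ((R -> Prop) -> Prop) -> Prop.
Definition closed (S : R -> Prop) (M : uset) : Prop := forall p, beta_closure S M p -> M p.
Definition good (S : R -> Prop) (M : uset) : Prop :=
  (exists q, M q) /\ (forall q, M q -> ultrafilter S q) /\ closed S M.

Lemma bc_mono S (M N : uset) p : (forall q, M q -> N q) -> beta_closure S M p -> beta_closure S N p.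
Proof.
  intros MN [U H]. split; auto. intros A pA. destruct (H A pA) as [q [Mq qA]]. eauto.
Qed.

Lemma closed_basic S E : closed S (fun q => ultrafilter S q /\ q E).
Proof.
  intros p [Up H]. split; auto. apply NNPP; intro N. apply (uf_compl S p) in N; auto.
  destruct (H _ N) as [q [[Uq qE] qN]]. apply (uf_not_both S q E); auto.
Qed.

Lemma KL S (NN : uset -> Prop) :
  (forall N, NN N -> closed S N) ->
  (forall l : list uset, (forall N, In N l -> NN N) ->
     exists q, ultrafilter S q /\ forall N, In N l -> N q) ->
  exists q, ultrafilter S q /\ forall N, NN N -> N q.
Proof.
  intros Hcl Hfin.
  set (G := fun D : R -> Prop => exists N, NN N /\ forall q, N q -> ultrafilter S q -> q D).
  assert (FG : FIP S G).
  { intros l Hl.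
    assert (E : exists ln, (forall N, In N ln -> NN N) /\
                 forall D, In D l -> exists N, In N ln /\ forall q, N q -> ultrafilter S q -> q D).
    { clear - Hl. induction l as [|D l IH].
      - exists nil. split. intros _ []. intros _ [].
      - destruct IH as [ln [H1 H2]]. intros; apply Hl; simpl; auto.
        destruct (Hl D (or_introl eq_refl)) as [N [NN1 HN]].
        exists (N :: ln). split.
        + intros N' [<-|I]; auto.
        + intros D' [<-|I]. exists N; simpl; auto.
          destruct (H2 D' I) as [N' [I' H']]. exists N'; simpl; auto. }
    destruct E as [ln [H1 H2]]. destruct (Hfin ln H1) as [q [Uq Hq]].
    assert (Iq : q (inter l)).
    { apply (uf_inter_list S q); auto. intros D ID. destruct (H2 D ID) as [N [IN HN]]. apply (HN q); [apply Hq; exact IN | exact Uq]. }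
    destruct (uf_nonempty S q _ Uq Iq) as [x [Sx Ix]]. exists x; auto. }
  destruct (UL S G FG) as [r [Ur Hr]].
  exists r. split; auto. intros N NN1. apply Hcl; auto. split; auto.
  intros A rA. apply NNPP; intro Nq.
  assert (GA : G (fun x => S x /\ ~ A x)).
  { exists N. split; auto. intros q Nq' Uq. apply (uf_compl S q); auto. intro qA. apply Nq. eauto. }
  apply (uf_not_both S r A Ur rA (Hr _ GA)).
Qed.

Lemma img_closed S M z : dense_subsemigroup S -> good S M -> ultrafilter S z ->
  closed S (fun w => exists u, M u /\ w = bplus S u z).
Proof.
  intros HS [_ [MU Mcl]] Uz r [Ur Hr].
  set (NN := fun N : uset => N = M \/ exists D, r D /\
            N = (fun q => ultrafilter S q /\ q (fun s => S s /\ z (shiftset S s D)))).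
  destruct (KL S NN) as [q [Uq Hq]].
  - intros N [->|[D [_ ->]]]. exact Mcl. apply closed_basic.
  - intros l Hl.
    assert (E : exists Ds, r Ds /\ forall N, In N l -> N = M \/
               forall q, ultrafilter S q -> q (fun s => S s /\ z (shiftset S s Ds)) -> N q).
    { clear - Hl Ur Uz. induction l as [|N l IH].
      - exists S. split. apply (uf_S S r); auto. intros _ [].
      - destruct IH as [Ds [rD HD]]. intros; apply Hl; simpl; auto.
        destruct (Hl N (or_introl eq_refl)) as [->|[D [rD' ->]]].
        + exists Ds. split; auto. intros N' [<-|I]; auto.
        + exists (fun x => Ds x /\ D x). split. apply (uf_and S r); auto.
          intros N' [<-|I].
          * right. intros q Uq Hq. split; auto. apply (uf_up S q _ _ Uq Hq).
            intros s Ss [_ H]. split; auto. apply (uf_up S z _ _ Uz H). intros y Sy [_ [_ Dy]]. split; auto.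
          * destruct (HD N' I) as [E|H]; auto. right. intros q Uq Hq. apply H; auto.
            apply (uf_up S q _ _ Uq Hq).
            intros s Ss [_ H']. split; auto. apply (uf_up S z _ _ Uz H'). intros y Sy [_ [Dy _]]. split; auto. }
    destruct E as [Ds [rD HD]].
    destruct (Hr Ds rD) as [w [[u [Mu ->]] Hw]].
    exists u. split. apply MU; auto.
    intros N I. destruct (HD N I) as [->|H]; auto.
  - exists q. split. apply (Hq M). left; auto.
    apply uf_ext with (S := S); auto. apply bplus_uf; auto.
    intros D rD. apply (Hq (fun q => ultrafilter S q /\ q (fun s => S s /\ z (shiftset S s D)))).
    right. exists D. auto.
Qed.

Lemma closed_inter S M (NN : uset -> Prop) : closed S M -> (forall N, NN N -> closed S N) ->
  closed S (fun q => M q /\ forall N, NN N -> N q).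
Proof.
  intros HM HN p Hp. split.
  - apply HM. apply (bc_mono S (fun q => M q /\ forall N, NN N -> N q) _ p); [|exact Hp]. intros q [Mq _]; auto.
  - intros N NN1. apply HN; auto. apply (bc_mono S (fun q => M q /\ forall N, NN N -> N q) _ p); [|exact Hp]. intros q [_ Hq]; apply Hq; exact NN1.
Qed.

Lemma min_good S (Phi : uset -> Prop) (M0 : uset) :
  good S M0 -> Phi M0 ->
  (forall NN : uset -> Prop,
     (forall N, NN N -> good S N /\ Phi N /\ (forall q, N q -> M0 q)) ->
     (forall N1 N2, NN N1 -> NN N2 -> (forall q, N1 q -> N2 q) \/ (forall q, N2 q -> N1 q)) ->
     Phi (fun q => M0 q /\ forall N, NN N -> N q)) ->
  exists N, good S N /\ Phi N /\ (forall q, N q -> M0 q) /\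
    forall N', good S N' -> Phi N' -> (forall q, N' q -> N q) -> forall q, N q -> N' q.
Proof.
  intros G0 P0 HPhi.
  set (NC := fun (C : uset) (q : (R -> Prop) -> Prop) => M0 q /\ ~ C q).
  destruct (@zorn_max ((R -> Prop) -> Prop) (fun C => good S (NC C) /\ Phi (NC C))) as [C [[GC PC] HC]].
  - intros F FP Ftot.
    set (NN := fun N => exists C, F C /\ N = NC C).
    assert (E : NC (fun x => exists X, F X /\ X x) = (fun q => M0 q /\ forall N, NN N -> N q)).
    { apply functional_extensionality; intro q; apply propositional_extensionality. unfold NC, NN.
      split.
      - intros [M0q nC]. split; auto. intros N [C [FC ->]]. split; auto. intro Cq; apply nC; eauto.
      - intros [M0q H]. split; auto. intros [X [FX Xq]]. destruct (H (NC X)) as [_ nX]; eauto. }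
    assert (HNN : forall N, NN N -> good S N /\ Phi N /\ (forall q, N q -> M0 q)).
    { intros N [C [FC ->]]. destruct (FP C FC) as [g p]. split; auto. split; auto. intros q [? _]; auto. }
    assert (ch : forall N1 N2, NN N1 -> NN N2 -> (forall q, N1 q -> N2 q) \/ (forall q, N2 q -> N1 q)).
    { intros N1 N2 [C1 [F1 ->]] [C2 [F2 ->]]. destruct (Ftot C1 C2 F1 F2) as [H|H].
      - right. intros q [m n]. split; auto.
      - left. intros q [m n]. split; auto. }
    rewrite E. split; [|apply HPhi; auto].
    destruct G0 as [[q0 Mq0] [MU Mcl]].
    split; [|split].
    + destruct (KL S (fun N => N = M0 \/ NN N)) as [q [Uq Hq]].
      * intros N [->|HN]; auto. apply HNN; auto.
      * intros l Hl.
        assert (E2 : exists Nm, (Nm = M0 \/ NN Nm) /\ forall N, In N l -> forall q, Nm q -> N q).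
        { clear - Hl HNN ch. induction l as [|N l IH].
          - exists M0. split; [left; reflexivity|]. intros _ [].
          - destruct IH as [Nm [HNm Hm]]. { intros N' I'; apply Hl; right; exact I'. }
            assert (Nsub : forall N1, (N1 = M0 \/ NN N1) -> forall q, N1 q -> M0 q).
            { intros N1 [E1|E1] q H1. rewrite <- E1; exact H1. apply (HNN N1 E1); exact H1. }
            destruct (Hl N (or_introl eq_refl)) as [EN|HN].
            + exists Nm. split; [exact HNm|]. intros N' [E'|I'] q Hq.
              * rewrite <- E', EN. apply (Nsub Nm HNm q Hq).
              * apply (Hm N' I' q Hq).
            + destruct HNm as [EM|HNm].
              * exists N. split; [right; exact HN|]. intros N' [E'|I'] q Hq.
                -- rewrite <- E'; exact Hq.
                -- apply (Hm N' I' q). rewrite EM. apply (Nsub N (or_intror HN) q Hq).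
              * destruct (ch Nm N HNm HN) as [H|H].
                -- exists Nm. split; [right; exact HNm|]. intros N' [E'|I'] q Hq.
                   ++ rewrite <- E'. apply H; exact Hq.
                   ++ apply (Hm N' I' q Hq).
                -- exists N. split; [right; exact HN|]. intros N' [E'|I'] q Hq.
                   ++ rewrite <- E'; exact Hq.
                   ++ apply (Hm N' I' q). apply H; exact Hq. }
        destruct E2 as [Nm [HNm Hm]].
        assert (GNm : good S Nm) by (destruct HNm as [->|HNm]; [split; [exists q0; exact Mq0 | split; [exact MU | exact Mcl]] | apply HNN; auto]).
        destruct GNm as [[q Nq] [U _]]. exists q. split; [apply U; exact Nq | intros N I; apply (Hm N I q Nq)].
      * exists q. split. apply Hq; auto. intros N HN; apply Hq; auto.
    + intros q [Mq _]; auto.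
    + apply closed_inter; auto. intros N HN. apply HNN; auto.
  - exists (NC C). split; auto. split; auto. split. intros q [? _]; auto.
    intros N' GN' PN' sub q NCq.
    assert (E : NC (fun q => ~ N' q) = N').
    { apply functional_extensionality; intro w; apply propositional_extensionality. unfold NC.
      split. intros [_ H]. apply NNPP; auto. intros H. split. destruct (sub w H); auto. tauto. }
    assert (HP : good S (NC (fun q => ~ N' q)) /\ Phi (NC (fun q => ~ N' q))) by (rewrite E; auto).
    apply NNPP; intro nN'.
    apply (HC (fun q => ~ N' q) HP) in nN'.
    + destruct NCq; contradiction.
    + intros w Cw nN''. apply (sub w) in nN''. destruct nN''; contradiction.
Qed.


Lemma near0_uf S C : (forall d, 0 < d -> exists x, S x /\ 0 < x /\ x < d /\ C x) ->
  exists r, Oplus S r /\ r C.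
Proof.
  intros H.
  set (G := fun B : R -> Prop => B = C \/ exists e, 0 < e /\ B = (fun x => S x /\ 0 < x /\ x < e)).
  assert (FG : FIP S G).
  { intros l Hl.
    assert (E : exists e, 0 < e /\ forall x, S x -> 0 < x -> x < e -> C x -> inter l x).
    { clear H. induction l as [|B l IH].
      - exists 1. split. lra. intros x _ _ _ _ B [].
      - destruct IH as [e [e0 He]]. intros B' I'; apply Hl; right; exact I'.
        destruct (Hl B (or_introl eq_refl)) as [EB|[e' [e'0 EB]]].
        + exists e. split; auto. intros x Sx x0 xe Cx B' [E'|I'].
          * subst B'. rewrite EB. exact Cx.
          * apply (He x Sx x0 xe Cx B' I').
        + exists (Rmin e e'). split. apply Rmin_pos; auto.
          intros x Sx x0 xe Cx B' [E'|I'].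
          * subst B'. rewrite EB. split; auto. split; auto. apply Rlt_le_trans with (1 := xe). apply Rmin_r.
          * apply (He x Sx x0); auto. apply Rlt_le_trans with (1 := xe). apply Rmin_l. }
    destruct E as [e [e0 He]]. destruct (H e e0) as [x [Sx [x0 [xe Cx]]]].
    exists x. split; auto. }
  destruct (UL S G FG) as [r [Ur Hr]].
  exists r. split.
  - split; auto. intros eps He. apply Hr. right. exists eps. auto.
  - apply Hr. left; auto.
Qed.

Lemma Oplus_nonempty S : dense_subsemigroup S -> exists r, Oplus S r.
Proof.
  intros HS. destruct (near0_uf S S) as [r [Hr _]].
  - intros d d0. destruct HS as [_ [_ Hd]]. destruct (Hd (d/2) d) as [s [Ss [s1 s2]]]; try lra.
    exists s. repeat split; auto; lra.
  - exists r; auto.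
Qed.

Lemma Oplus_closed S : closed S (Oplus S).
Proof.
  intros p [Up H]. split; auto. intros eps He. apply NNPP; intro N.
  apply (uf_compl S p) in N; auto. destruct (H _ N) as [q [[Uq Hq] qN]].
  apply (uf_not_both S q _ Uq (Hq eps He) qN).
Qed.

Lemma Oplus_good S : dense_subsemigroup S -> good S (Oplus S).
Proof.
  intros HS. split; [apply Oplus_nonempty; auto|]. split. intros q [U _]; auto. apply Oplus_closed.
Qed.

Lemma ellis S M : dense_subsemigroup S -> good S M ->
  (forall p q, M p -> M q -> M (bplus S p q)) -> exists p, M p /\ bplus S p p = p.
Proof.
  intros HS GM HM.
  destruct (min_good S (fun N => forall p q, N p -> N q -> N (bplus S p q)) M GM HM) as
      [N [[[p Np] [NU Ncl]] [PN [NM Nmin]]]].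
  { intros NN HNN ch p q [Mp Hp] [Mq Hq]. split; auto. intros N HN.
    destruct (HNN N HN) as [_ [PN _]]. apply PN; [apply Hp; exact HN | apply Hq; exact HN]. }
  exists p. split; auto.
  assert (Up := NU p Np).
  (* N + p = N *)
  assert (E1 : exists u, N u /\ p = bplus S u p).
  { set (N1 := fun w => exists u, N u /\ w = bplus S u p).
    assert (G1 : good S N1).
    { split; [exists (bplus S p p); exists p; auto|]. split.
      - intros w [u [Nu ->]]. apply bplus_uf; auto.
      - apply img_closed; auto. split; [exists p; auto|split; auto]. }
    assert (P1 : forall a b, N1 a -> N1 b -> N1 (bplus S a b)).
    { intros a b [u1 [N1' ->]] [u2 [N2' ->]].
      exists (bplus S (bplus S u1 p) u2). split.
      - apply PN; auto.
      - rewrite bplus_assoc; auto; apply bplus_uf; auto. }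
    assert (S1 : forall q, N1 q -> N q).
    { intros w [u [Nu ->]]. apply PN; auto. }
    apply (Nmin N1 G1 P1 S1 p Np). }
  destruct E1 as [u0 [Nu0 Eu0]].
  set (N2 := fun u => N u /\ bplus S u p = p).
  assert (G2 : good S N2).
  { split; [exists u0; split; auto|]. split.
    - intros q [Nq _]; auto.
    - intros r Hr. assert (Nr : N r).
      { apply Ncl. apply (bc_mono S N2); [|exact Hr]. intros q [Nq _]; auto. }
      split; auto. destruct Hr as [Ur Hr].
      symmetry. apply (uf_ext S p (bplus S r p) Up); [apply bplus_uf; auto|].
      intros D pD. apply NNPP; intro nD. unfold bplus in nD.
      apply (uf_compl S r) in nD; auto. destruct (Hr _ nD) as [q [[Nq Eq] qD]].
      assert (Uq := NU q Nq).
      rewrite <- Eq in pD. unfold bplus in pD.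
      apply (uf_not_both S q _ Uq pD qD). }
  assert (P2 : forall a b, N2 a -> N2 b -> N2 (bplus S a b)).
  { intros a b [Na Ea] [Nb Eb]. split. apply PN; auto.
    rewrite <- bplus_assoc; auto. rewrite Eb. exact Ea. }
  assert (S2 : forall q, N2 q -> N q) by (intros q [? _]; auto).
  destruct (Nmin N2 G2 P2 S2 p Np) as [_ E]. exact E.
Qed.

Definition Min (S : R -> Prop) (q : (R -> Prop) -> Prop) : Prop :=
  forall r, Oplus S r -> exists u, Oplus S u /\ q = bplus S u (bplus S r q).

Lemma Min_exists S : dense_subsemigroup S -> exists q, Oplus S q /\ Min S q.
Proof.
  intros HS.
  destruct (min_good S (fun N => forall p q, Oplus S p -> N q -> N (bplus S p q)) (Oplus S))
    as [N [[[q Nq] [NU Ncl]] [PN [NM Nmin]]]].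
  - apply Oplus_good; auto.
  - intros; apply Oplus_add; auto.
  - intros NN HNN ch p q Op [Mq Hq]. split. apply Oplus_add; auto. intros N HN.
    destruct (HNN N HN) as [_ [PN _]]. apply PN; [exact Op | apply Hq; exact HN].
  - exists q. split; auto. intros r Or.
    set (L := fun w => exists u, Oplus S u /\ w = bplus S u (bplus S r q)).
    assert (Urq : ultrafilter S (bplus S r q)) by (apply bplus_uf; auto; apply Oplus_uf; auto).
    assert (GL : good S L).
    { split; [exists (bplus S r (bplus S r q)); exists r; auto|]. split.
      - intros w [u [Ou ->]]. apply bplus_uf; auto. apply Oplus_uf; auto.
      - apply img_closed; auto. apply Oplus_good; auto. }
    assert (PL : forall p w, Oplus S p -> L w -> L (bplus S p w)).
    { intros p w Op [u [Ou ->]]. exists (bplus S p u). split. apply Oplus_add; auto.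
      rewrite bplus_assoc; auto; apply Oplus_uf; auto. }
    assert (SL : forall w, L w -> N w).
    { intros w [u [Ou ->]]. apply PN; auto. }
    destruct (Nmin L GL PL SL q Nq) as [u [Ou Eu]]. exists u; auto.
Qed.

Lemma is_sum_eq S r p q : is_sum S r p q -> r = bplus S p q.
Proof.
  intros H. apply functional_extensionality; intro A; apply propositional_extensionality; apply H.
Qed.

Lemma I0_ideal S : dense_subsemigroup S ->
  two_sided_ideal_Oplus S (fun q => Oplus S q /\ Min S q).
Proof.
  intros HS. split; [|split; [|split]].
  - apply Min_exists; auto.
  - intros q [? _]; auto.
  - intros p q r Op [Oq Mq] E. apply is_sum_eq in E. subst r. split. apply Oplus_add; auto.
    intros r Or. destruct (Mq (bplus S r p)) as [u [Ou Eu]]. apply Oplus_add; auto.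
    exists (bplus S p u). split. apply Oplus_add; auto.
    assert (Ur := Oplus_uf S r Or). assert (Up := Oplus_uf S p Op).
    assert (Uq := Oplus_uf S q Oq). assert (Uu := Oplus_uf S u Ou).
    rewrite Eu at 1.
    rewrite <- !bplus_assoc; auto; repeat apply bplus_uf; auto.
  - intros p q r Op [Oq Mq] E. apply is_sum_eq in E. subst r. split. apply Oplus_add; auto.
    intros r Or. destruct (Mq r Or) as [u [Ou Eu]].
    exists u. split; auto.
    assert (Ur := Oplus_uf S r Or). assert (Up := Oplus_uf S p Op).
    assert (Uq := Oplus_uf S q Oq). assert (Uu := Oplus_uf S u Ou).
    rewrite Eu at 1.
    rewrite <- !bplus_assoc; auto; repeat apply bplus_uf; auto.
Qed.

Lemma K_iff S q : dense_subsemigroup S -> (K_Oplus S q <-> Oplus S q /\ Min S q).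
Proof.
  intros HS. split.
  - intros HK. apply HK. apply I0_ideal; auto.
  - intros [Oq Mq] I [[i Ii] [IO [IL IR]]].
    assert (Oi := IO i Ii).
    destruct (Mq i Oi) as [u [Ou Eu]].
    apply (IL u (bplus S i q) q Ou).
    + apply (IR q i (bplus S i q) Oq Ii). intro A; tauto.
    + rewrite Eu at 1. intro A; tauto.
Qed.


Lemma arch d : 0 < d -> exists n, (1 <= n)%nat /\ 1 / INR n < d.
Proof.
  intros Hd. destruct (archimed_cor1 d Hd) as [n [H1 H2]]. exists n. split. lia.
  unfold Rdiv; rewrite Rmult_1_l; exact H1.
Qed.

Lemma inv_mono (n m : nat) : (1 <= m)%nat -> (m <= n)%nat -> 1 / INR n <= 1 / INR m.
Proof.
  intros H1 H2. unfold Rdiv; rewrite !Rmult_1_l. apply Rinv_le_contravar.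
  apply lt_0_INR; lia. apply le_INR; lia.
Qed.

Lemma inv_pos (n : nat) : (1 <= n)%nat -> 0 < 1 / INR n.
Proof.
  intros H. unfold Rdiv; rewrite Rmult_1_l. apply Rinv_0_lt_compat. apply lt_0_INR; lia.
Qed.

Lemma K_right S q p : dense_subsemigroup S -> K_Oplus S q -> Oplus S p -> K_Oplus S (bplus S q p).
Proof.
  intros HS Kq Op. destruct (I0_ideal S HS) as [_ [_ [_ IR]]].
  apply K_iff; auto. apply (IR p q); auto. apply K_iff; auto. intro; tauto.
Qed.

Lemma K_left S q p : dense_subsemigroup S -> K_Oplus S q -> Oplus S p -> K_Oplus S (bplus S p q).
Proof.
  intros HS Kq Op. destruct (I0_ideal S HS) as [_ [_ [IL _]]].
  apply K_iff; auto. apply (IL p q); auto. apply K_iff; auto. intro; tauto.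
Qed.

Lemma K_exists S : dense_subsemigroup S -> exists q, K_Oplus S q.
Proof.
  intros HS. destruct (Min_exists S HS) as [q Hq]. exists q. apply K_iff; auto.
Qed.

Lemma K_Oplus_O S q : dense_subsemigroup S -> K_Oplus S q -> Oplus S q.
Proof. intros HS Kq. apply K_iff in Kq; tauto. Qed.

Lemma S_elem S : dense_subsemigroup S -> forall d, 0 < d -> exists s, S s /\ 0 < s /\ s < d.
Proof.
  intros [_ [_ Hd]] d d0. destruct (Hd (d/2) d) as [s [Ss [s1 s2]]]; try lra.
  exists s. repeat split; auto; lra.
Qed.

Lemma PS_to_K S B : dense_subsemigroup S -> piecewise_syndetic_near_zero S B ->
  exists q, K_Oplus S q /\ q B.
Proof.
  intros HS [F [delta [HF HG]]].
  set (Bn := fun n y => S y /\ exists t, In t (F n) /\ shiftset S t B y).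
  set (G' := fun D : R -> Prop =>
         (exists n g, (1 <= n)%nat /\ S g /\ 0 < g /\ g < delta n /\ D = shiftset S g (Bn n)) \/
         (exists e, 0 < e /\ D = (fun x => S x /\ 0 < x /\ x < e))).
  assert (FG : FIP S G').
  { intros l Hl.
    assert (E : exists gl mu, 0 < mu /\ (forall g, In g gl -> S g) /\
              forall x, S x -> 0 < x -> x < mu ->
                (forall n, (1 <= n)%nat -> forall g, In g gl -> 0 < g -> g < delta n ->
                   exists t, In t (F n) /\ shiftset S t B (g + x)) -> inter l x).
    { clear HG. induction l as [|D l IH].
      - exists nil, 1. split. lra. split. intros _ []. intros x _ _ _ _ D [].
      - destruct IH as [gl [mu [mu0 [Hgl H]]]]. intros D' I'; apply Hl; right; exact I'.
        destruct (Hl D (or_introl eq_refl)) as [[n [g [n1 [Sg [g0 [gd ED]]]]]]|[e [e0 ED]]].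
        + exists (g :: gl), mu. split; auto. split. intros g' [<-|I]; auto.
          intros x Sx x0 xm Hx D' [E'|I'].
          * subst D'. rewrite ED. split; auto. unfold Bn. split. apply ds_add; auto.
            apply (Hx n n1 g (or_introl eq_refl) g0 gd).
          * apply (H x Sx x0 xm); auto. intros n' n1' g' Ig'. apply Hx; auto. right; auto.
        + exists gl, (Rmin mu e). split. apply Rmin_pos; auto. split; auto.
          intros x Sx x0 xm Hx D' [E'|I'].
          * subst D'. rewrite ED. split; auto. split; auto.
            apply Rlt_le_trans with (1 := xm). apply Rmin_r.
          * apply (H x Sx x0); auto. apply Rlt_le_trans with (1 := xm). apply Rmin_l. }
    destruct E as [gl [mu [mu0 [Hgl H]]]].
    destruct (S_elem S HS 1) as [s0 [Ss0 _]]; [lra|].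
    destruct (HG (s0 :: gl) mu) as [x [Sx [x0 [xm Hx]]]].
    - discriminate.
    - intros g [<-|I]; auto.
    - exact mu0.
    - exists x. split; auto. apply (H x Sx x0 xm). intros n n1 g Ig. apply Hx; auto. right; auto. }
  destruct (UL S G' FG) as [p [Up Hp]].
  assert (Op : Oplus S p).
  { split; auto. intros eps He. apply Hp. right. exists eps. auto. }
  destruct (K_exists S HS) as [r0 Kr0].
  assert (Or0 := K_Oplus_O S r0 HS Kr0).
  set (w := bplus S r0 p).
  assert (Kw : K_Oplus S w) by (apply K_right; auto).
  assert (Uw : ultrafilter S w) by (apply Oplus_uf, K_Oplus_O; auto).
  assert (wB : forall n, (1 <= n)%nat -> w (Bn n)).
  { intros n n1. destruct (HF n n1) as [_ [_ [d0 _]]]. unfold w, bplus.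
    destruct Or0 as [Ur0 Hr0].
    apply (uf_up S r0 _ _ Ur0 (Hr0 (delta n) d0)).
    intros s Ss [_ [s0 sd]]. split; auto. apply Hp. left. exists n, s. repeat split; auto. }
  set (T := fun t => S t /\ exists n, (1 <= n)%nat /\ In t (F n) /\ w (shiftset S t B)).
  destruct (near0_uf S T) as [v [Ov vT]].
  { intros d d0. destruct (arch d d0) as [n [n1 nd]].
    assert (H := wB n n1).
    assert (H' : w (fun y => exists t, In t (F n) /\ shiftset S t B y)).
    { apply (uf_up S w _ _ Uw H). intros y _ [_ Hy]. exact Hy. }
    destruct (uf_union_list S w (F n) (fun t => shiftset S t B) Uw H') as [t [It wt]].
    destruct (HF n n1) as [_ [Ht _]]. destruct (Ht t It) as [St [t0 t1]].
    exists t. split; auto. split; auto. split. lra. split; auto. exists n. auto. }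
  exists (bplus S v w). split.
  - apply K_left; auto.
  - unfold bplus. apply (uf_up S v _ _ (Oplus_uf S v Ov) vT).
    intros s Ss [_ [n [_ [_ Hs]]]]. split; auto.
Qed.


Lemma K_cover S B q n : dense_subsemigroup S -> K_Oplus S q -> q B -> (1 <= n)%nat ->
  exists Fn, Fn <> nil /\ (forall t, In t Fn -> S t /\ 0 < t /\ t < 1 / INR n) /\
    forall r, Oplus S r -> exists t, In t Fn /\ bplus S r q (shiftset S t B).
Proof.
  intros HS Kq qB n1.
  apply K_iff in Kq; auto. destruct Kq as [Oq Mq]. assert (Uq := Oplus_uf S q Oq).
  assert (n0 := inv_pos n n1).
  assert (claim : forall r, Oplus S r -> exists t, S t /\ 0 < t /\ t < 1 / INR n /\ bplus S r q (shiftset S t B)).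
  { intros r Or. destruct (Mq r Or) as [u [Ou Eu]].
    rewrite Eu in qB. unfold bplus at 1 in qB. destruct Ou as [Uu Hu].
    destruct (uf_nonempty S u _ Uu (uf_and S u _ _ Uu qB (Hu (1 / INR n) n0))) as [t [St [[_ H] [_ [t0 t1]]]]].
    exists t. auto. }
  apply NNPP; intro H.
  destruct (S_elem S HS (1 / INR n) n0) as [t0 [St0 [t00 t01]]].
  set (Lset := fun w => exists r, Oplus S r /\ w = bplus S r q).
  set (NN := fun N : uset => N = Lset \/ exists t, S t /\ 0 < t /\ t < 1 / INR n /\
               N = (fun w => ultrafilter S w /\ w (fun y => S y /\ ~ shiftset S t B y))).
  destruct (KL S NN) as [w [Uw Hw]].
  - intros N [->|[t [_ [_ [_ ->]]]]]. apply img_closed; auto. apply Oplus_good; auto. apply closed_basic.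
  - intros l Hl.
    assert (E : exists tl, (forall t, In t tl -> S t /\ 0 < t /\ t < 1 / INR n) /\
               forall N, In N l -> forall w, Lset w -> ultrafilter S w ->
                 (forall t, In t tl -> ~ w (shiftset S t B)) -> N w).
    { clear - Hl. induction l as [|N l IH].
      - exists nil. split. intros _ []. intros _ [].
      - destruct IH as [tl [H1 H2]]. intros N' I'; apply Hl; right; exact I'.
        destruct (Hl N (or_introl eq_refl)) as [EN|[t [St [t0 [t1 EN]]]]].
        + exists tl. split; auto. intros N' [E'|I'] w Lw Uw Hw.
          * subst N'. rewrite EN. exact Lw.
          * apply H2; auto.
        + exists (t :: tl). split. intros t' [<-|I]; auto.
          intros N' [E'|I'] w Lw Uw Hw.
          * subst N'. rewrite EN. split; auto. apply (uf_compl S w); auto. apply Hw. left; auto.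
          * apply H2; auto. intros t' I''. apply Hw. right; auto. }
    destruct E as [tl [H1 H2]].
    assert (nc : ~ forall r, Oplus S r -> exists t, In t (t0 :: tl) /\ bplus S r q (shiftset S t B)).
    { intro Hc. apply H. exists (t0 :: tl). split. discriminate. split; auto.
      intros t [<-|I]; auto. }
    apply not_all_ex_not in nc. destruct nc as [r nc]. apply imply_to_and in nc. destruct nc as [Or nc].
    exists (bplus S r q). split. apply bplus_uf; auto. apply Oplus_uf; auto.
    intros N I. apply (H2 N I).
    + exists r; auto.
    + apply bplus_uf; auto. apply Oplus_uf; auto.
    + intros t It wt. apply nc. exists t. split; auto. right; auto.
  - destruct (Hw Lset (or_introl eq_refl)) as [r [Or ->]].
    destruct (claim r Or) as [t [St [t0' [t1' Ht]]]].
    assert (Hb := Hw (fun w => ultrafilter S w /\ w (fun y => S y /\ ~ shiftset S t B y))).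
    destruct Hb as [_ Hb]. right. exists t. auto.
    apply (uf_not_both S _ _ Uw Ht Hb).
Qed.

Lemma finite_inter S q (Z : nat -> R -> Prop) m : ultrafilter S q -> (forall n, q (Z n)) ->
  q (fun x => forall n, (n <= m)%nat -> Z n x).
Proof.
  intros Uq HZ. induction m as [|m IH].
  - apply (uf_up S q _ _ Uq (HZ 0%nat)). intros x _ Hx n Hn. assert (n = 0%nat) by lia. subst; auto.
  - apply (uf_up S q _ _ Uq (uf_and S q _ _ Uq IH (HZ (Datatypes.S m)))).
    intros x _ [H1 H2] n Hn. destruct (Nat.eq_dec n (Datatypes.S m)) as [->|ne]; auto. apply H1; lia.
Qed.

Lemma K_to_PS S B q : dense_subsemigroup S -> K_Oplus S q -> q B -> piecewise_syndetic_near_zero S B.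
Proof.
  intros HS Kq qB.
  assert (Oq := K_Oplus_O S q HS Kq). assert (Uq := Oplus_uf S q Oq).
  assert (H1 : forall n, exists Fn, (1 <= n)%nat -> Fn <> nil /\ (forall t, In t Fn -> S t /\ 0 < t /\ t < 1 / INR n) /\
    forall r, Oplus S r -> exists t, In t Fn /\ bplus S r q (shiftset S t B)).
  { intros n. destruct (Compare_dec.le_lt_dec 1 n) as [n1|n0].
    - destruct (K_cover S B q n HS Kq qB n1) as [Fn HFn]. exists Fn; auto.
    - exists nil. intros; lia. }
  set (F := fun n => proj1_sig (constructive_indefinite_description _ (H1 n))).
  assert (HF : forall n, (1 <= n)%nat -> F n <> nil /\ (forall t, In t (F n) -> S t /\ 0 < t /\ t < 1 / INR n) /\
    forall r, Oplus S r -> exists t, In t (F n) /\ bplus S r q (shiftset S t B)).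
  { intros n. exact (proj2_sig (constructive_indefinite_description _ (H1 n))). }
  clearbody F. clear H1.
  set (Bn := fun n y => S y /\ exists t, In t (F n) /\ shiftset S t B y).
  assert (H2 : forall n, exists d, (1 <= n)%nat -> 0 < d /\ d < 1 / INR n /\
                 forall s, S s -> 0 < s -> s < d -> q (shiftset S s (Bn n))).
  { intros n. destruct (Compare_dec.le_lt_dec 1 n) as [n1|n0]; [|exists 0; intros; lia].
    apply NNPP; intro H. assert (n0 := inv_pos n n1).
    destruct (near0_uf S (fun s => S s /\ ~ q (shiftset S s (Bn n)))) as [r [Or rC]].
    - intros d d0. set (d' := Rmin d (1 / INR n / 2)).
      assert (d'0 : 0 < d') by (apply Rmin_pos; lra).
      assert (d'1 : d' <= d) by apply Rmin_l.
      assert (d'2 : d' <= 1 / INR n / 2) by apply Rmin_r.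
      apply NNPP; intro H'. apply H. exists d'. intros _. split; auto. split. lra.
      intros s Ss s0 sd. apply NNPP; intro nq. apply H'. exists s. repeat split; auto. lra.
    - destruct (HF n n1) as [_ [_ Hc]]. destruct (Hc r Or) as [t [It Ht]].
      assert (rB : bplus S r q (Bn n)).
      { apply (uf_up S _ _ _ (bplus_uf S r q HS (Oplus_uf S r Or) Uq) Ht).
        intros y Sy Hy. split; auto. exists t; auto. }
      unfold bplus in rB. apply (uf_not_both S r _ (Oplus_uf S r Or) rB).
      apply (uf_up S r _ _ (Oplus_uf S r Or) rC). intros s Ss [_ ns]. split; auto. tauto. }
  set (delta := fun n => proj1_sig (constructive_indefinite_description _ (H2 n))).
  assert (Hd : forall n, (1 <= n)%nat -> 0 < delta n /\ delta n < 1 / INR n /\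
                 forall s, S s -> 0 < s -> s < delta n -> q (shiftset S s (Bn n))).
  { intros n. exact (proj2_sig (constructive_indefinite_description _ (H2 n))). }
  clearbody delta. clear H2.
  exists F, delta. split.
  { intros n n1. destruct (HF n n1) as [A1 [A2 _]]. destruct (Hd n n1) as [D1 [D2 _]]. auto. }
  intros G mu Gne GS mu0.
  assert (Yg : forall g, S g -> q (fun x => forall n, (1 <= n)%nat -> 0 < g -> g < delta n -> shiftset S g (Bn n) x)).
  { intros g Sg. assert (g0 := ds_pos S HS g Sg). destruct (arch g g0) as [N [N1 Ng]].
    set (Z := fun n x => (1 <= n)%nat -> 0 < g -> g < delta n -> shiftset S g (Bn n) x).
    assert (HZ : forall n, q (Z n)).
    { intros n. destruct (classic ((1 <= n)%nat /\ 0 < g /\ g < delta n)) as [[n1 [g0' gd]]|nn].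
      - destruct (Hd n n1) as [_ [_ H]]. apply (uf_up S q _ _ Uq (H g Sg g0' gd)).
        intros x _ Hx _ _ _. exact Hx.
      - apply (uf_up S q _ _ Uq (uf_S S q Uq)). intros x _ _ n1 g0' gd. exfalso; auto. }
    apply (uf_up S q _ _ Uq (finite_inter S q Z N Uq HZ)).
    intros x _ H n n1 g0' gd. apply (H n); auto.
    destruct (Compare_dec.le_lt_dec n N) as [l|l]; auto. exfalso.
    destruct (Hd n n1) as [_ [D2 _]]. assert (Hi := inv_mono n N N1 ltac:(lia)). lra. }
  assert (YG : q (fun x => forall g, In g G -> forall n, (1 <= n)%nat -> 0 < g -> g < delta n -> shiftset S g (Bn n) x)).
  { clear Gne. induction G as [|g G IH].
    - apply (uf_up S q _ _ Uq (uf_S S q Uq)). intros x _ _ g [].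
    - apply (uf_up S q _ _ Uq (uf_and S q _ _ Uq (Yg g (GS g (or_introl eq_refl))) (IH (fun g' I => GS g' (or_intror I))))).
      intros x _ [H1 H2] g' [<-|I]; auto. }
  destruct Oq as [_ Hq].
  destruct (uf_nonempty S q _ Uq (uf_and S q _ _ Uq YG (Hq mu mu0))) as [x [Sx [HY [_ [x0 xm]]]]].
  exists x. split; auto. split; auto. split; auto.
  intros n n1 g Ig g0 gd. destruct (HY g Ig n n1 g0 gd) as [_ [_ Ht]]. exact Ht.
Qed.


Lemma clK_closed S : closed S (beta_closure S (K_Oplus S)).
Proof.
  intros r [Ur Hr]. split; auto. intros A rA. destruct (Hr A rA) as [q [[_ Hq] qA]]. apply Hq; auto.
Qed.

Lemma clK_Oplus S q : dense_subsemigroup S -> beta_closure S (K_Oplus S) q -> Oplus S q.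
Proof.
  intros HS H. apply Oplus_closed. apply (bc_mono S (K_Oplus S)); auto.
  intros k Kk; apply K_Oplus_O; auto.
Qed.

Lemma K_clK S q : dense_subsemigroup S -> K_Oplus S q -> beta_closure S (K_Oplus S) q.
Proof.
  intros HS Kq. split. apply Oplus_uf, K_Oplus_O; auto. intros A qA. eauto.
Qed.

Lemma clK_add S q1 q2 : dense_subsemigroup S -> beta_closure S (K_Oplus S) q1 ->
  beta_closure S (K_Oplus S) q2 -> beta_closure S (K_Oplus S) (bplus S q1 q2).
Proof.
  intros HS H1 H2. assert (O2 := clK_Oplus S q2 HS H2). assert (O1 := clK_Oplus S q1 HS H1).
  split. apply bplus_uf; auto; apply Oplus_uf; auto.
  intros D HD. destruct H1 as [_ H1]. destruct (H1 _ HD) as [k [Kk kD]].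
  exists (bplus S k q2). split. apply K_right; auto. exact kD.
Qed.

Definition islim (S : R -> Prop) {X : Type} (t : topology X) (T : R -> X -> X)
  (q : (R -> Prop) -> Prop) (z w : X) : Prop :=
  forall V, open t V -> V w -> q (fun s => S s /\ V (T s z)).

Lemma islim_comp S {X : Type} (t : topology X) T q1 q2 z w v :
  dense_subsemigroup S -> dynamical_system S t T -> ultrafilter S q1 -> ultrafilter S q2 ->
  islim S t T q2 z w -> islim S t T q1 w v -> islim S t T (bplus S q1 q2) z v.
Proof.
  intros HS [_ [_ [Hc Ha]]] U1 U2 L2 L1 V OV Vv. unfold bplus.
  apply (uf_up S q1 _ _ U1 (L1 V OV Vv)). intros s Ss [_ Vs]. split; auto.
  apply (uf_up S q2 _ _ U2 (L2 (fun z' => V (T s z')) (Hc s Ss V OV) Vs)).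
  intros u Su [_ Vu]. split; auto. split. apply ds_add; auto. rewrite <- Ha; auto.
Qed.

Lemma nbhd_inter {X : Type} (t : topology X) W1 W2 y :
  nbhd_top t W1 y -> nbhd_top t W2 y -> nbhd_top t (fun z => W1 z /\ W2 z) y.
Proof.
  intros [V1 [O1 [y1 H1]]] [V2 [O2 [y2 H2]]]. exists (fun z => V1 z /\ V2 z).
  split. apply open_inter; auto. split; auto. intros z [a b]; auto.
Qed.

Lemma backward S A {X : Type} (t : topology X) (T : R -> X -> X) (x y : X) (U : X -> Prop) :
  dense_subsemigroup S -> dynamical_system S t T -> JIUR0 S t T x y -> nbhd_top t U y ->
  (forall s, A s <-> (S s /\ U (T s x))) -> quasi_central_near_zero S A.
Proof.
  intros HS Hdyn HJ HU HA.
  set (clK := beta_closure S (K_Oplus S)).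
  set (M := fun q => clK q /\ islim S t T q x y /\ islim S t T q y y).
  set (BW := fun (W : X -> Prop) s => S s /\ W (T s x) /\ W (T s y)).
  assert (GM : good S M).
  { split; [|split].
    - destruct (KL S (fun N => N = clK \/ exists W, nbhd_top t W y /\ N = (fun w => ultrafilter S w /\ w (BW W))))
        as [q [Uq Hq]].
      + intros N [->|[W [_ ->]]]. apply clK_closed. apply closed_basic.
      + intros l Hl.
        assert (E : exists Ws, nbhd_top t Ws y /\ forall N, In N l -> N = clK \/
                     forall w, ultrafilter S w -> w (BW Ws) -> N w).
        { clear - Hl. induction l as [|N l IH].
          - exists (fun _ => True). split.
            + exists (fun _ => True). split. apply open_full. split; auto.
            + intros _ [].
          - destruct IH as [Ws [HWs HN]]. intros N' I'; apply Hl; right; exact I'.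
            destruct (Hl N (or_introl eq_refl)) as [EN|[W [HW EN]]].
            + exists Ws. split; auto. intros N' [E'|I']; auto. left. rewrite <- E'; exact EN.
            + exists (fun z => Ws z /\ W z). split. apply nbhd_inter; auto.
              intros N' [E'|I'].
              * right. rewrite <- E', EN. intros w Uw Hw. split; auto.
                apply (uf_up S w _ _ Uw Hw). intros s _ [Ss [[_ a] [_ b]]]. split; auto.
              * destruct (HN N' I') as [E|H]; [left; exact E|]. right. intros w Uw Hw. apply H; auto.
                apply (uf_up S w _ _ Uw Hw). intros s _ [Ss [[a _] [b _]]]. split; auto. }
        destruct E as [Ws [HWs HN]].
        destruct (PS_to_K S (BW Ws) HS (HJ Ws HWs)) as [k [Kk kB]].
        exists k. split. apply Oplus_uf, K_Oplus_O; auto.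
        intros N I. destruct (HN N I) as [->|H].
        * apply K_clK; auto.
        * apply H; auto. apply Oplus_uf, K_Oplus_O; auto.
      + exists q. assert (cq : clK q) by (apply Hq; left; auto).
        assert (HB : forall W, nbhd_top t W y -> q (BW W)).
        { intros W HW. destruct (Hq (fun w => ultrafilter S w /\ w (BW W))) as [_ H]; auto.
          right. exists W; auto. }
        split; auto. split.
        * intros V OV Vy. apply (uf_up S q _ _ Uq (HB V ltac:(exists V; auto))).
          intros s _ [Ss [a b]]. auto.
        * intros V OV Vy. apply (uf_up S q _ _ Uq (HB V ltac:(exists V; auto))).
          intros s _ [Ss [a b]]. auto.
    - intros q [[Uq _] _]; auto.
    - intros r Hr. split; [|split].
      + apply clK_closed. apply (bc_mono S M); auto. intros q [c _]; exact c.
      + intros V OV Vy. destruct Hr as [Ur Hr]. apply NNPP; intro N.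
        apply (uf_compl S r) in N; auto. destruct (Hr _ N) as [q [[[Uq _] [Lq _]] qN]].
        apply (uf_not_both S q _ Uq (Lq V OV Vy) qN).
      + intros V OV Vy. destruct Hr as [Ur Hr]. apply NNPP; intro N.
        apply (uf_compl S r) in N; auto. destruct (Hr _ N) as [q [[[Uq _] [_ Lq]] qN]].
        apply (uf_not_both S q _ Uq (Lq V OV Vy) qN). }
  assert (PM : forall p q, M p -> M q -> M (bplus S p q)).
  { intros p q [cp [Lp1 Lp2]] [cq [Lq1 Lq2]]. assert (Up := proj1 cp). assert (Uq := proj1 cq).
    split. apply clK_add; auto. split.
    - apply islim_comp with (w := y); auto.
    - apply islim_comp with (w := y); auto. }
  destruct (ellis S M HS GM PM) as [p [[cp [Lp _]] Ep]].
  exists p. split; [|split; auto].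
  - split. exact (proj1 cp). intro B. rewrite Ep. tauto.
  - destruct HU as [V0 [O0 [y0 H0]]]. apply (uf_up S p _ _ (proj1 cp) (Lp V0 O0 y0)).
    intros s _ [Ss Vs]. apply HA. auto.
Qed.


Definition S0 (S : R -> Prop) : R -> Prop := fun z => z = 0 \/ S z.
Definition Xb (S : R -> Prop) : Type := { p : (R -> Prop) -> Prop | ultrafilter (S0 S) p }.

Lemma Xb_ext S (a b : Xb S) : proj1_sig a = proj1_sig b -> a = b.
Proof.
  destruct a as [a Ha], b as [b Hb]. simpl. intros ->. f_equal. apply proof_irrelevance.
Qed.

Lemma S0_add S s y : dense_subsemigroup S -> S s -> S0 S y -> S (s + y).
Proof.
  intros HS Ss [->|Sy]. rewrite Rplus_0_r; auto. apply ds_add; auto.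
Qed.

Lemma shift_uf S s p : dense_subsemigroup S -> S s -> ultrafilter (S0 S) p ->
  ultrafilter (S0 S) (fun C => p (shiftset (S0 S) s C)).
Proof.
  intros HS Ss Up. split; [|split; [|split; [|split]]].
  - apply (uf_up _ p _ _ Up (uf_S _ p Up)). intros y Sy _. split; auto. right. apply S0_add; auto.
  - intro H. destruct (uf_nonempty _ p _ Up H) as [y [_ [_ F]]]; exact F.
  - intros A B HA HB. apply (uf_up _ p _ _ Up (uf_and _ p _ _ Up HA HB)).
    intros y _ [[a b] [_ c]]. repeat split; auto.
  - intros A B HA AB. apply (uf_up _ p _ _ Up HA). intros y _ [a b]. split; auto.
  - intros A. destruct (classic (p (shiftset (S0 S) s A))) as [H|H]; [left; auto|right].
    apply (uf_compl (S0 S) p) in H; auto. apply (uf_up _ p _ _ Up H).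
    intros y Sy [_ N]. split; auto. split. right. apply S0_add; auto. intro a; apply N; split; auto.
Qed.

Definition Tb (S : R -> Prop) (HS : dense_subsemigroup S) (s : R) (z : Xb S) : Xb S :=
  match excluded_middle_informative (S s) with
  | left Hs => exist _ (fun C => proj1_sig z (shiftset (S0 S) s C)) (shift_uf S s (proj1_sig z) HS Hs (proj2_sig z))
  | right _ => z
  end.

Lemma Tb_val S HS s z : S s -> proj1_sig (Tb S HS s z) = (fun C => proj1_sig z (shiftset (S0 S) s C)).
Proof.
  intros Ss. unfold Tb. destruct (excluded_middle_informative (S s)) as [H|H]; [reflexivity|contradiction].
Qed.

Definition Xopen (S : R -> Prop) (V : Xb S -> Prop) : Prop :=
  forall q : Xb S, V q -> exists C, proj1_sig q C /\ forall q' : Xb S, proj1_sig q' C -> V q'.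

Lemma Xopen_full S : Xopen S (fun _ => True).
Proof. intros q _. exists (S0 S). split; auto. apply (uf_S _ _ (proj2_sig q)). Qed.

Lemma Xopen_inter S U V : Xopen S U -> Xopen S V -> Xopen S (fun x => U x /\ V x).
Proof.
  intros HU HV q [Uq Vq]. destruct (HU q Uq) as [C1 [q1 H1]]. destruct (HV q Vq) as [C2 [q2 H2]].
  exists (fun x => C1 x /\ C2 x). split. apply (uf_and _ _ _ _ (proj2_sig q)); auto.
  intros q' Hq'. split.
  - apply H1. apply (uf_up _ _ _ _ (proj2_sig q') Hq'). intros z _ [a _]; auto.
  - apply H2. apply (uf_up _ _ _ _ (proj2_sig q') Hq'). intros z _ [_ b]; auto.
Qed.

Lemma Xopen_union S (Fam : (Xb S -> Prop) -> Prop) :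
  (forall U, Fam U -> Xopen S U) -> Xopen S (fun x => exists U, Fam U /\ U x).
Proof.
  intros H q [U [FU Uq]]. destruct (H U FU q Uq) as [C [qC HC]]. exists C. split; auto.
  intros q' Hq'. exists U. split; auto.
Qed.

Definition Xtop (S : R -> Prop) : topology (Xb S) :=
  {| open := Xopen S; open_full := Xopen_full S; open_inter := Xopen_inter S; open_union := Xopen_union S |}.

Lemma X_compact S : compact_space (Xtop S).
Proof.
  intros Fam HO Hcov. apply NNPP; intro Nfin.
  set (G := fun D : R -> Prop => exists C V, Fam V /\ (forall q' : Xb S, proj1_sig q' C -> V q') /\
                                   D = (fun z => S0 S z /\ ~ C z)).
  assert (FG : FIP (S0 S) G).
  { intros l Hl.
    assert (E : exists lV, (forall V, In V lV -> Fam V) /\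
               forall D, In D l -> exists C V, In V lV /\ (forall q' : Xb S, proj1_sig q' C -> V q') /\
                                   D = (fun z => S0 S z /\ ~ C z)).
    { clear - Hl. induction l as [|D l IH].
      - exists nil. split; intros _ [].
      - destruct IH as [lV [H1 H2]]. intros D' I'; apply Hl; right; exact I'.
        destruct (Hl D (or_introl eq_refl)) as [C [V [FV [HV ED]]]].
        exists (V :: lV). split. intros V' [<-|I]; auto.
        intros D' [<-|I].
        + exists C, V. split. left; auto. auto.
        + destruct (H2 D' I) as [C' [V' [I' H']]]. exists C', V'. split. right; auto. auto. }
    destruct E as [lV [H1 H2]].
    assert (nc : ~ forall x, exists U, In U lV /\ U x).
    { intro Hc. apply Nfin. exists lV. auto. }
    apply not_all_ex_not in nc. destruct nc as [q nc].
    assert (Iq : proj1_sig q (inter l)).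
    { apply (uf_inter_list _ _ _ (proj2_sig q)). intros D I.
      destruct (H2 D I) as [C [V [IV [HV ->]]]].
      apply (uf_compl _ _ _ (proj2_sig q)). intro qC. apply nc. exists V. auto. }
    apply (uf_nonempty _ _ _ (proj2_sig q) Iq). }
  destruct (UL _ G FG) as [r [Ur Hr]].
  destruct (Hcov (exist _ r Ur)) as [V [FV Vr]].
  destruct (HO V FV _ Vr) as [C [rC HC]]. simpl in rC.
  apply (uf_not_both _ r C Ur rC). apply Hr. exists C, V. auto.
Qed.

Lemma X_hausdorff S : hausdorff (Xtop S).
Proof.
  intros a b ne.
  assert (E : exists C, proj1_sig a C /\ ~ proj1_sig b C).
  { apply NNPP; intro N. apply ne. apply Xb_ext.
    apply (uf_ext _ _ _ (proj2_sig a) (proj2_sig b)). intros C aC. apply NNPP; intro bC. apply N. eauto. }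
  destruct E as [C [aC bC]].
  exists (fun q : Xb S => proj1_sig q C), (fun q : Xb S => proj1_sig q (fun z => S0 S z /\ ~ C z)).
  split; [|split; [|split; [|split]]].
  - intros q qC. exists C. auto.
  - intros q qC. exists (fun z => S0 S z /\ ~ C z). auto.
  - exact aC.
  - apply (uf_compl _ _ _ (proj2_sig b)); auto.
  - intros z H1 H2. apply (uf_not_both _ _ _ (proj2_sig z) H1 H2).
Qed.

Lemma forward S A : dense_subsemigroup S -> (forall s, A s -> S s) -> quasi_central_near_zero S A ->
  exists (X : Type) (t : topology X) (T : R -> X -> X) (x y : X) (U : X -> Prop),
     dynamical_system S t T /\ JIUR0 S t T x y /\ nbhd_top t U y /\
     (forall s, A s <-> (S s /\ U (T s x))).
Proof.
  intros HS HAS [p [[Up Ep] [cp pA]]].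
  assert (U0 : ultrafilter (S0 S) (fun C => C 0)).
  { split; [|split; [|split; [|split]]].
    - left; auto.
    - auto.
    - intros; split; auto.
    - intros A1 B1 H1 H2; auto.
    - intros C. destruct (classic (C 0)); [left; auto|right]. split; auto. left; auto. }
  assert (Up0 : ultrafilter (S0 S) p).
  { split; [|split; [|split; [|split]]].
    - apply (uf_up S p _ _ Up (uf_S S p Up)). intros z Sz _. right; auto.
    - destruct Up as [_ [H _]]; auto.
    - intros; apply (uf_and S p); auto.
    - intros A1 B1 H1 H2. apply (uf_up S p _ _ Up H1). auto.
    - intros C. destruct (classic (p C)); [left; auto|right].
      apply (uf_compl S p) in H; auto. apply (uf_up S p _ _ Up H). intros z _ [Sz nC]. split; auto. right; auto. }
  set (x := exist _ (fun C => C 0) U0 : Xb S).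
  set (y := exist _ p Up0 : Xb S).
  exists (Xb S), (Xtop S), (Tb S HS), x, y, (fun q : Xb S => proj1_sig q A).
  assert (Tx : forall s C, S s -> proj1_sig (Tb S HS s x) C <-> C s).
  { intros s C Ss. rewrite Tb_val; auto. simpl. unfold shiftset. rewrite Rplus_0_r.
    split. intros [_ H]; auto. intros H; split; auto. left; auto. }
  split; [|split; [|split]].
  - split; [apply X_compact|split; [apply X_hausdorff|split]].
    + intros s Ss V OV q Vq. simpl in OV.
      destruct (OV _ Vq) as [C [qC HC]]. rewrite Tb_val in qC; auto.
      exists (shiftset (S0 S) s C). split; auto.
      intros q' Hq'. apply HC. rewrite Tb_val; auto.
    + intros s u Ss Su z. apply Xb_ext. rewrite !Tb_val; auto; [|apply ds_add; auto].
      apply functional_extensionality; intro C. apply propositional_extensionality.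
      apply (uf_iff_S _ _ _ _ (proj2_sig z)). intros w Sw. unfold shiftset.
      rewrite Rplus_assoc. split.
      * intros [_ [_ H]]; split; auto.
      * intros [_ H]; split; auto. split; auto. right. apply S0_add; auto.
  - intros W [V [OV [Vy HV]]].
    destruct (OV y Vy) as [C [pC HC]]. simpl in pC.
    destruct cp as [_ cp].
    assert (pB : p (fun s => S s /\ W (Tb S HS s x) /\ W (Tb S HS s y))).
    { assert (H2 : bplus S p p C) by exact (proj1 (Ep C) pC).
      unfold bplus in H2.
      apply (uf_up S p _ _ Up (uf_and S p _ _ Up pC H2)).
      intros s Ss [Cs [_ Hs]]. split; auto. split.
      - apply HV, HC. apply Tx; auto.
      - apply HV, HC. rewrite Tb_val; auto. simpl.
        apply (uf_up S p _ _ Up Hs). intros z Sz [_ Cz]. split; auto. right; auto. }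
    destruct (cp _ pB) as [k [Kk kB]].
    apply (K_to_PS S _ k HS Kk kB).
  - exists (fun q : Xb S => proj1_sig q A). split.
    + intros q qA. exists A. auto.
    + split; auto.
  - intros s. split.
    + intros As. assert (Ss := HAS s As). split; auto. apply Tx; auto.
    + intros [Ss H]. apply Tx in H; auto.
Qed.


Theorem theorem3p6 (S A : R -> Prop) :
  dense_subsemigroup S ->
  (forall s, A s -> S s) ->
  (quasi_central_near_zero S A <->
   exists (X : Type) (t : topology X) (T : R -> X -> X) (x y : X) (U : X -> Prop),
     dynamical_system S t T /\ JIUR0 S t T x y /\ nbhd_top t U y /\
     (forall s, A s <-> (S s /\ U (T s x)))).
Proof.
  intros HS HAS. split.
  - apply forward; auto.
  - intros [X [t [T [x [y [U [Hd [HJ [HU HA]]]]]]]]].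
    apply (backward S A t T x y U); auto.
Qed.
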